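(* Let $G$ be a finite group with $c(G)$ conjugacy classes. Then \[ Spec_4(G)=\left\{1,\ \frac{c(G)}{|G|},\ Pr^4(G)\right\}. \]
   Context: For $\pi\in S_n$ in one-line notation $\langle\pi_1\dots\pi_n\rangle$, $Pr_\pi(G)$ is the probability that $a_1\cdots a_n=a_{\pi_1}\cdots a_{\pi_n}$ for independent uniformly random $a_1,\dots,a_n\in G$. $Spec_n(G)=\{Pr_\pi(G):\pi\in S_n\}$. $Pr^4(G)=Pr_{\langle4\;3\;2\;1\rangle}(G)$ is the probability that $a_1a_2a_3a_4=a_4a_3a_2a_1$. *)

(* Defs.v *)
From HB Require Import structures.
From mathcomp Require Import all_boot all_order all_algebra all_fingroup.
Set Implicit Arguments. Unset Strict Implicit. Unset Printing Implicit Defensive.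
Import GRing.Theory.

(* Pr_pi(G): probability that a_1...a_n = a_{pi 1}...a_{pi n} for a uniformly
   random tuple a : 'I_n -> gT (indices shifted to 0..n-1). *)
Definition prodEq (gT : finGroupType) (n : nat) (pi : 'S_n)
  (a : {ffun 'I_n -> gT}) : bool :=
  ((\prod_(i < n) a i)%g == (\prod_(i < n) a (pi i))%g).

Definition Pr (gT : finGroupType) (n : nat) (pi : 'S_n) : rat :=
  (#|[set a : {ffun 'I_n -> gT} | prodEq pi a]|%:R / (#|gT| ^ n)%:R)%R.

Definition Spec (gT : finGroupType) (n : nat) (q : rat) : Prop :=
  exists pi : 'S_n, Pr gT pi = q.

(* The permutation <4 3 2 1>, i.e. i |-> 3 - i on 'I_4. *)
Definition rev4 : 'S_4 := perm (@rev_ord_inj 4).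

Definition Pr4 (gT : finGroupType) : rat := Pr gT rev4.

Definition commProb (gT : finGroupType) : rat :=
  (#|classes [set: gT]|%:R / #|gT|%:R)%R.

(* Main.v *)
Require Import Defs.
From mathcomp Require Import all_boot all_order all_algebra all_fingroup.
From mathcomp Require Import ring.
Import GRing.Theory Num.Theory.
Set Implicit Arguments. Unset Strict Implicit. Unset Printing Implicit Defensive.

Section Work.
Variable gT : finGroupType.
Local Open Scope group_scope.

Definition o0 : 'I_4 := ord0.
Definition o1 : 'I_4 := lift ord0 (ord0 : 'I_3).
Definition o2 : 'I_4 := lift ord0 (lift ord0 (ord0 : 'I_2)).
Definition o3 : 'I_4 := lift ord0 (lift ord0 (lift ord0 (ord0 : 'I_1))).

Definition mk4 (x0 x1 x2 x3 : gT) : {ffun 'I_4 -> gT} :=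
  [ffun i : 'I_4 => nth x0 [:: x0; x1; x2; x3] i].

Lemma ord4P (i : 'I_4) : [\/ i = o0, i = o1, i = o2 | i = o3].
Proof.
case: i => [[|[|[|[|//]]]] Hi].
- by constructor 1; apply: val_inj.
- by constructor 2; apply: val_inj.
- by constructor 3; apply: val_inj.
- by constructor 4; apply: val_inj.
Qed.

Lemma ffun4 (f g : {ffun 'I_4 -> gT}) :
  f o0 = g o0 -> f o1 = g o1 -> f o2 = g o2 -> f o3 = g o3 -> f = g.
Proof. by move=> H0 H1 H2 H3; apply/ffunP => i; case: (ord4P i) => ->. Qed.

Definition CS (i j k l : 'I_4) : {set {ffun 'I_4 -> gT}} :=
  [set a : {ffun 'I_4 -> gT} | a o0 * a o1 * a o2 * a o3 == a i * a j * a k * a l].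
Definition C (i j k l : 'I_4) : nat := #|CS i j k l|.

Definition W (i j k l : 'I_4) (a : {ffun 'I_4 -> gT}) : gT :=
  (a o0 * a o1 * a o2 * a o3) * (a i * a j * a k * a l)^-1.

Ltac gnorm := rewrite ?invMg ?invgK ?mulgA;
  repeat progress rewrite ?mulgK ?mulgVK ?mulgV ?mulVg ?mul1g ?mulg1 ?invg1 ?invMg ?invgK ?mulgA.

Lemma C_bij i j k l i' j' k' l' (h h' : {ffun 'I_4 -> gT} -> {ffun 'I_4 -> gT})
  (g : {ffun 'I_4 -> gT} -> gT) (b : bool) :
  cancel h h' -> cancel h' h ->
  (forall a, W i j k l (h a) = (g a)^-1 * (if b then W i' j' k' l' a else (W i' j' k' l' a)^-1) * g a) ->
  C i j k l = C i' j' k' l'.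
Proof.
move=> hK h'K HW; rewrite /C.
have inj_h : injective h by apply: can_inj hK.
rewrite -(card_imset (CS i' j' k' l') inj_h); apply: eq_card => x.
have -> : (x \in [set h a | a in CS i' j' k' l']) = (h' x \in CS i' j' k' l').
  apply/imsetP/idP => [[a Ha ->]|Hx]; first by rewrite hK.
  by exists (h' x); rewrite ?h'K.
rewrite /CS !inE eq_mulgV1 [in RHS]eq_mulgV1.
have := HW (h' x); rewrite h'K /W => ->.
have E (u v : gT) : (u^-1 * v * u == 1) = (v == 1) by rewrite -mulgA -conjgE conjg_eq1.
rewrite E; clear HW; by case: b => //; rewrite eq_invg1.
Qed.

Lemma C_0132 : C o0 o1 o3 o2 = C o1 o0 o2 o3.
Proof.
apply: (@C_bij _ _ _ _ _ _ _ _ (fun a => mk4 (a o2) (a o3) (a o0) (a o1))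
  (fun a => mk4 (a o2) (a o3) (a o0) (a o1)) (fun a => (a o3)^-1 * (a o2)^-1) true).
- by move=> a; apply: ffun4; rewrite !ffunE /=; gnorm.
- by move=> a; apply: ffun4; rewrite !ffunE /=; gnorm.
- by move=> a; rewrite /W !ffunE /=; gnorm.
Qed.

Lemma C_0213 : C o0 o2 o1 o3 = C o1 o0 o2 o3.
Proof.
apply: (@C_bij _ _ _ _ _ _ _ _ (fun a => mk4 (a o2) (a o0) (a o1) (a o3))
  (fun a => mk4 (a o1) (a o2) (a o0) (a o3)) (fun a => (a o2)^-1) true).
- by move=> a; apply: ffun4; rewrite !ffunE /=; gnorm.
- by move=> a; apply: ffun4; rewrite !ffunE /=; gnorm.
- by move=> a; rewrite /W !ffunE /=; gnorm.
Qed.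

Lemma C_0231 : C o0 o2 o3 o1 = C o1 o0 o2 o3.
Proof.
apply: (@C_bij _ _ _ _ _ _ _ _ (fun a => mk4 (a o2) (a o0) (a o1 * (a o3)^-1) (a o3))
  (fun a => mk4 (a o1) (a o2 * a o3) (a o0) (a o3)) (fun a => (a o2)^-1) true).
- by move=> a; apply: ffun4; rewrite !ffunE /=; gnorm.
- by move=> a; apply: ffun4; rewrite !ffunE /=; gnorm.
- by move=> a; rewrite /W !ffunE /=; gnorm.
Qed.

Lemma C_0312 : C o0 o3 o1 o2 = C o1 o0 o2 o3.
Proof.
apply: (@C_bij _ _ _ _ _ _ _ _ (fun a => mk4 (a o2) (a o0 * (a o3)^-1) (a o3) (a o1))
  (fun a => mk4 (a o1 * a o2) (a o3) (a o0) (a o2)) (fun a => (a o2)^-1) true).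
- by move=> a; apply: ffun4; rewrite !ffunE /=; gnorm.
- by move=> a; apply: ffun4; rewrite !ffunE /=; gnorm.
- by move=> a; rewrite /W !ffunE /=; gnorm.
Qed.

Lemma C_0321 : C o0 o3 o2 o1 = C o1 o0 o2 o3.
Proof.
apply: (@C_bij _ _ _ _ _ _ _ _ (fun a => mk4 (a o2) (a o0 * (a o1)^-1 * a o3) ((a o3)^-1 * a o1) (a o3))
  (fun a => mk4 (a o1 * a o2) (a o3 * a o2) (a o0) (a o3)) (fun a => (a o2)^-1) true).
- by move=> a; apply: ffun4; rewrite !ffunE /=; gnorm.
- by move=> a; apply: ffun4; rewrite !ffunE /=; gnorm.
- by move=> a; rewrite /W !ffunE /=; gnorm.
Qed.

Lemma C_1032 : C o1 o0 o3 o2 = C o3 o2 o1 o0.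
Proof.
apply: (@C_bij _ _ _ _ _ _ _ _ (fun a => mk4 (a o0 * (a o2)^-1 * (a o3)^-1) (a o0 * a o1) (a o2) (a o3))
  (fun a => mk4 (a o0 * a o3 * a o2) ((a o2)^-1 * (a o3)^-1 * (a o0)^-1 * a o1) (a o2) (a o3)) (fun a => a o0 * a o1 * a o2 * a o3 * (a o0)^-1 * (a o1)^-1 * (a o0)^-1) true).
- by move=> a; apply: ffun4; rewrite !ffunE /=; gnorm.
- by move=> a; apply: ffun4; rewrite !ffunE /=; gnorm.
- by move=> a; rewrite /W !ffunE /=; gnorm.
Qed.

Lemma C_1203 : C o1 o2 o0 o3 = C o1 o0 o2 o3.
Proof.
apply: (@C_bij _ _ _ _ _ _ _ _ (fun a => mk4 (a o0) (a o1 * (a o2)^-1) (a o2) (a o3))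
  (fun a => mk4 (a o0) (a o1 * a o2) (a o2) (a o3)) (fun a => 1) true).
- by move=> a; apply: ffun4; rewrite !ffunE /=; gnorm.
- by move=> a; apply: ffun4; rewrite !ffunE /=; gnorm.
- by move=> a; rewrite /W !ffunE /=; gnorm.
Qed.

Lemma C_1230 : C o1 o2 o3 o0 = C o1 o0 o2 o3.
Proof.
apply: (@C_bij _ _ _ _ _ _ _ _ (fun a => mk4 (a o0) (a o1 * (a o3)^-1 * (a o2)^-1) (a o2) (a o3))
  (fun a => mk4 (a o0) (a o1 * a o2 * a o3) (a o2) (a o3)) (fun a => 1) true).
- by move=> a; apply: ffun4; rewrite !ffunE /=; gnorm.
- by move=> a; apply: ffun4; rewrite !ffunE /=; gnorm.
- by move=> a; rewrite /W !ffunE /=; gnorm.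
Qed.

Lemma C_1302 : C o1 o3 o0 o2 = C o3 o2 o1 o0.
Proof.
apply: (@C_bij _ _ _ _ _ _ _ _ (fun a => mk4 (a o1 * a o0) (a o1) (a o2) (a o3 * a o2))
  (fun a => mk4 ((a o1)^-1 * a o0) (a o1) (a o2) (a o3 * (a o2)^-1)) (fun a => (a o1)^-1) true).
- by move=> a; apply: ffun4; rewrite !ffunE /=; gnorm.
- by move=> a; apply: ffun4; rewrite !ffunE /=; gnorm.
- by move=> a; rewrite /W !ffunE /=; gnorm.
Qed.

Lemma C_1320 : C o1 o3 o2 o0 = C o3 o2 o1 o0.
Proof.
apply: (@C_bij _ _ _ _ _ _ _ _ (fun a => mk4 (a o1 * a o0) (a o1) (a o2) (a o3))
  (fun a => mk4 ((a o1)^-1 * a o0) (a o1) (a o2) (a o3)) (fun a => (a o1)^-1) true).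
- by move=> a; apply: ffun4; rewrite !ffunE /=; gnorm.
- by move=> a; apply: ffun4; rewrite !ffunE /=; gnorm.
- by move=> a; rewrite /W !ffunE /=; gnorm.
Qed.

Lemma C_2013 : C o2 o0 o1 o3 = C o1 o0 o2 o3.
Proof.
apply: (@C_bij _ _ _ _ _ _ _ _ (fun a => mk4 (a o0 * (a o2)^-1) (a o2) (a o1) (a o3))
  (fun a => mk4 (a o0 * a o1) (a o2) (a o1) (a o3)) (fun a => 1) true).
- by move=> a; apply: ffun4; rewrite !ffunE /=; gnorm.
- by move=> a; apply: ffun4; rewrite !ffunE /=; gnorm.
- by move=> a; rewrite /W !ffunE /=; gnorm.
Qed.

Lemma C_2031 : C o2 o0 o3 o1 = C o3 o2 o1 o0.
Proof.
apply: (@C_bij _ _ _ _ _ _ _ _ (fun a => mk4 (a o1 * (a o3)^-1) (a o0) (a o1 * a o2) (a o3))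
  (fun a => mk4 (a o1) (a o0 * a o3) ((a o3)^-1 * (a o0)^-1 * a o2) (a o3)) (fun a => a o0 * a o1 * a o2 * a o3 * (a o0)^-1 * (a o1)^-1 * (a o2)^-1 * (a o1)^-1) true).
- by move=> a; apply: ffun4; rewrite !ffunE /=; gnorm.
- by move=> a; apply: ffun4; rewrite !ffunE /=; gnorm.
- by move=> a; rewrite /W !ffunE /=; gnorm.
Qed.

Lemma C_2103 : C o2 o1 o0 o3 = C o1 o0 o2 o3.
Proof.
apply: (@C_bij _ _ _ _ _ _ _ _ (fun a => mk4 (a o0 * (a o1)^-1 * a o2) ((a o2)^-1 * a o1) (a o2) (a o3))
  (fun a => mk4 (a o0 * a o1) (a o2 * a o1) (a o2) (a o3)) (fun a => 1) true).
- by move=> a; apply: ffun4; rewrite !ffunE /=; gnorm.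
- by move=> a; apply: ffun4; rewrite !ffunE /=; gnorm.
- by move=> a; rewrite /W !ffunE /=; gnorm.
Qed.

Lemma C_2130 : C o2 o1 o3 o0 = C o3 o2 o1 o0.
Proof.
apply: (@C_bij _ _ _ _ _ _ _ _ (fun a => mk4 ((a o3)^-1 * a o0) (a o1) (a o2) (a o3))
  (fun a => mk4 (a o3 * a o0) (a o1) (a o2) (a o3)) (fun a => a o0 * a o1 * a o2 * a o3 * (a o0)^-1 * (a o1)^-1 * (a o2)^-1) true).
- by move=> a; apply: ffun4; rewrite !ffunE /=; gnorm.
- by move=> a; apply: ffun4; rewrite !ffunE /=; gnorm.
- by move=> a; rewrite /W !ffunE /=; gnorm.
Qed.

Lemma C_2301 : C o2 o3 o0 o1 = C o1 o0 o2 o3.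
Proof.
apply: (@C_bij _ _ _ _ _ _ _ _ (fun a => mk4 (a o0 * (a o2)^-1) (a o2) (a o1 * (a o3)^-1) (a o3))
  (fun a => mk4 (a o0 * a o1) (a o2 * a o3) (a o1) (a o3)) (fun a => 1) true).
- by move=> a; apply: ffun4; rewrite !ffunE /=; gnorm.
- by move=> a; apply: ffun4; rewrite !ffunE /=; gnorm.
- by move=> a; rewrite /W !ffunE /=; gnorm.
Qed.

Lemma C_2310 : C o2 o3 o1 o0 = C o1 o0 o2 o3.
Proof.
apply: (@C_bij _ _ _ _ _ _ _ _ (fun a => mk4 (a o0 * (a o1)^-1 * a o2 * a o3) ((a o3)^-1 * (a o2)^-1 * a o1) (a o2) (a o3))
  (fun a => mk4 (a o0 * a o1) (a o2 * a o3 * a o1) (a o2) (a o3)) (fun a => 1) true).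
- by move=> a; apply: ffun4; rewrite !ffunE /=; gnorm.
- by move=> a; apply: ffun4; rewrite !ffunE /=; gnorm.
- by move=> a; rewrite /W !ffunE /=; gnorm.
Qed.

Lemma C_3012 : C o3 o0 o1 o2 = C o1 o0 o2 o3.
Proof.
apply: (@C_bij _ _ _ _ _ _ _ _ (fun a => mk4 (a o0 * (a o3)^-1 * (a o2)^-1) (a o2) (a o3) (a o1))
  (fun a => mk4 (a o0 * a o1 * a o2) (a o3) (a o1) (a o2)) (fun a => 1) true).
- by move=> a; apply: ffun4; rewrite !ffunE /=; gnorm.
- by move=> a; apply: ffun4; rewrite !ffunE /=; gnorm.
- by move=> a; rewrite /W !ffunE /=; gnorm.
Qed.

Lemma C_3021 : C o3 o0 o2 o1 = C o3 o2 o1 o0.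
Proof.
apply: (@C_bij _ _ _ _ _ _ _ _ (fun a => mk4 (a o0) (a o1) (a o2) (a o3 * (a o0)^-1))
  (fun a => mk4 (a o0) (a o1) (a o2) (a o3 * a o0)) (fun a => 1) true).
- by move=> a; apply: ffun4; rewrite !ffunE /=; gnorm.
- by move=> a; apply: ffun4; rewrite !ffunE /=; gnorm.
- by move=> a; rewrite /W !ffunE /=; gnorm.
Qed.

Lemma C_3102 : C o3 o1 o0 o2 = C o3 o2 o1 o0.
Proof.
apply: (@C_bij _ _ _ _ _ _ _ _ (fun a => mk4 (a o0) (a o1) (a o2) (a o3 * a o2))
  (fun a => mk4 (a o0) (a o1) (a o2) (a o3 * (a o2)^-1)) (fun a => 1) true).
- by move=> a; apply: ffun4; rewrite !ffunE /=; gnorm.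
- by move=> a; apply: ffun4; rewrite !ffunE /=; gnorm.
- by move=> a; rewrite /W !ffunE /=; gnorm.
Qed.

Lemma C_3120 : C o3 o1 o2 o0 = C o1 o0 o2 o3.
Proof.
apply: (@C_bij _ _ _ _ _ _ _ _ (fun a => mk4 (a o0 * a o3) ((a o3)^-1 * a o1 * (a o2)^-1) (a o2) (a o3))
  (fun a => mk4 (a o0 * (a o3)^-1) (a o3 * a o1 * a o2) (a o2) (a o3)) (fun a => 1) true).
- by move=> a; apply: ffun4; rewrite !ffunE /=; gnorm.
- by move=> a; apply: ffun4; rewrite !ffunE /=; gnorm.
- by move=> a; rewrite /W !ffunE /=; gnorm.
Qed.

Lemma C_3201 : C o3 o2 o0 o1 = C o0 o2 o3 o1.
Proof.
apply: (@C_bij _ _ _ _ _ _ _ _ (fun a => mk4 ((a o2)^-1 * a o0) ((a o0)^-1 * a o1) (a o2) (a o3))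
  (fun a => mk4 (a o2 * a o0) (a o2 * a o0 * a o1) (a o2) (a o3)) (fun a => a o0 * a o1 * a o2 * a o3 * (a o1)^-1 * (a o3)^-1) true).
- by move=> a; apply: ffun4; rewrite !ffunE /=; gnorm.
- by move=> a; apply: ffun4; rewrite !ffunE /=; gnorm.
- by move=> a; rewrite /W !ffunE /=; gnorm.
Qed.

Lemma prod4 (F : 'I_4 -> gT) : \prod_(i < 4) F i = F o0 * F o1 * F o2 * F o3.
Proof. by rewrite !big_ord_recl big_ord0 mulg1 !mulgA. Qed.

Lemma C0123 : C o0 o1 o2 o3 = (#|gT| ^ 4)%N.
Proof.
rewrite /C /CS (_ : [set a | _] = setT); first by rewrite cardsT card_ffun card_ord.
by apply/setP => a; rewrite !inE eqxx.
Qed.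

Lemma commute_count :
  #|[set p : gT * gT | p.1 * p.2 == p.2 * p.1]| = (#|classes [set: gT]| * #|gT|)%N.
Proof.
have acts : [acts [set: gT], on [set: gT] | 'J].
  by apply/actsP => a _ x; rewrite !inE.
have := Frobenius_Cauchy acts.
rewrite cardsT => <-.
rewrite -sum1_card.
rewrite (eq_bigl (fun p : gT * gT => predT p.1 && (fun x y => x * y == y * x) p.1 p.2)); last first.
  by move=> p; rewrite !inE.
rewrite -(pair_big_dep predT (fun x y => x * y == y * x) (fun _ _ => 1%N)).
apply: eq_big => [x|x _]; first by rewrite /= !inE.
rewrite sum1_card; apply: eq_card => y.
rewrite in_setI in_setT /= unfold_in /=; apply/idP/afix1P => /= [/eqP H|H].
  by rewrite conjgE -H mulKg.
by apply/eqP; rewrite (conjgC y x) H.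
Qed.

Lemma eqg_mulr (x y z : gT) : (x * z == y * z) = (x == y).
Proof. exact: (inj_eq (mulIg z)). Qed.

Lemma C1023 : C o1 o0 o2 o3 = (#|classes [set: gT]| * #|gT| ^ 3)%N.
Proof.
pose phi (a : {ffun 'I_4 -> gT}) := ((a o0, a o1), (a o2, a o3)).
have phi_inj : injective phi.
  move=> a b [H0 H1 H2 H3]; exact: ffun4.
rewrite /C -(card_imset _ phi_inj).
rewrite (_ : [set phi x | x in _] = setX [set p : gT * gT | p.1 * p.2 == p.2 * p.1] setT).
  rewrite cardsX cardsT card_prod commute_count.
  by rewrite -mulnA; congr (_ * _)%N; rewrite !expnS expn0 muln1 mulnA.
apply/setP => -[[x0 x1] [x2 x3]]; rewrite !inE /=.
apply/imsetP/idP => [[a Ha [-> -> _ _]]|H].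
  by move: Ha; rewrite /CS inE -!(mulgA _ (a o2)) !eqg_mulr andbT.
exists (mk4 x0 x1 x2 x3); last by rewrite /phi !ffunE.
by move: H; rewrite /CS inE !ffunE /= -!(mulgA _ x2) eqg_mulr andbT.
Qed.

Lemma PrE (pi : 'S_4) :
  Pr gT pi = ((C (pi o0) (pi o1) (pi o2) (pi o3))%:R / (#|gT| ^ 4)%:R)%R.
Proof.
rewrite /Pr /C /CS; congr (_%:R / _)%R; apply: eq_card => a.
by rewrite !inE /prodEq !prod4.
Qed.

Lemma C_class (i j k l : 'I_4) : uniq [:: i; j; k; l] ->
  [\/ C i j k l = C o0 o1 o2 o3, C i j k l = C o1 o0 o2 o3 | C i j k l = C o3 o2 o1 o0].
Proof.
case: (ord4P i) => ->; case: (ord4P j) => ->; case: (ord4P k) => ->; case: (ord4P l) => -> //= U;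
rewrite ?C_3201 ?C_0132 ?C_0213 ?C_0231 ?C_0312 ?C_0321 ?C_1032 ?C_1203 ?C_1230 ?C_1302 ?C_1320 ?C_2013 ?C_2031 ?C_2103 ?C_2130 ?C_2301 ?C_2310 ?C_3012 ?C_3021 ?C_3102 ?C_3120;
first [ by constructor 1 | by constructor 2 | by constructor 3 ].
Qed.

Lemma rev4E : [/\ rev4 o0 = o3, rev4 o1 = o2, rev4 o2 = o1 & rev4 o3 = o0].
Proof. by split; rewrite permE; apply: val_inj. Qed.

End Work.

Theorem mainTheorem10 (gT : finGroupType) (q : rat) :
  Spec gT 4 q <-> [\/ q = 1%R, q = commProb gT | q = Pr4 gT].
Proof.
have P0 : (0 < #|gT|)%N by apply/card_gt0P; exists 1%g.
have G0 : (#|gT|%:R : rat) != 0%R by rewrite pnatr_eq0 -lt0n.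
have G4 : ((#|gT| ^ 4)%:R : rat) != 0%R by rewrite pnatr_eq0 -lt0n expn_gt0 P0.
have Rev : Pr4 gT = (((C gT o3 o2 o1 o0))%:R / (#|gT| ^ 4)%:R)%R.
  by case: rev4E => E0 E1 E2 E3; rewrite /Pr4 PrE E0 E1 E2 E3.
split.
- case=> pi <-; rewrite PrE.
  have U : uniq [:: pi o0; pi o1; pi o2; pi o3].
    by rewrite -[[:: pi o0; _; _; _]]/(map pi [:: o0; o1; o2; o3]) (map_inj_uniq (@perm_inj _ pi)).
  case: (@C_class gT _ _ _ _ U) => ->.
  + by constructor 1; rewrite C0123 divff.
  + constructor 2; rewrite C1023 /commProb natrM natrX; field.
    by rewrite G0.
  + by constructor 3; rewrite Rev.
- case=> ->.
  + by exists 1%g; rewrite PrE !perm1 C0123 divff.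
  + exists (tperm o0 o1); rewrite PrE tpermL tpermR !tpermD // C1023 /commProb natrM natrX.
    field. by rewrite G0.
  + by exists rev4.
Qed.
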